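(* Let $\varphi$ be a formula of $\mathrm{SMT}_\mathrm{RL}$ over a single string variable $x$, and let $(\mathrm{TS},P) = \textrm{BFA-to-TS}(\textrm{SMT-to-BFA}(\varphi))$. Then for every word $w = \sigma_0\cdots\sigma_{n-1} \in \Sigma^*$, the assignment $x := w$ satisfies $\varphi$ if and only if $w$ is the input sequence of a counterexample to $P$ in $\mathrm{TS}$, i.e. there is a path $v_0,\sigma_0,v_1,\ldots,\sigma_{n-1},v_n$ of $\mathrm{TS}$ with $v_0$ satisfying $I_B$, $(v_k,\sigma_k,v_{k+1})$ satisfying $\Delta_B$ for all $0\le k<n$, and $v_n$ violating $P$. In particular, $\varphi$ is satisfiable iff $P$ is not valid in $\mathrm{TS}$.
   Context: Fix a finite alphabet $\Sigma$. $\mathrm{SMT}_\mathrm{RL}$ is the set of formulas generated by $\varphi ::= \varphi \wedge \varphi \mid \varphi \vee \varphi \mid \neg \varphi \mid x \in L$, where $x$ is a string variable and $L$ is the language of a regular expression over $\Sigma$; the semantics is Boolean logic together with language membership. A Boolean finite automaton (BFA) is a tuple $B = (\Sigma, \tilde Q, \tilde I, \tilde F, \tilde\Delta)$ where $\tilde Q$ is a finite set of state variables, $\tilde I$ is a Boolean formula over $\tilde Q$, $\tilde F : \tilde Q \to \{0,1\}$ is an assignment, and $\tilde\Delta$ assigns to each $q \in \tilde Q$ and $\sigma \in \Sigma$ a Boolean formula $\tilde\Delta(q,\sigma)$ over $\tilde Q$. A word $\sigma_0\cdots\sigma_{n-1}$ is accepted by $B$ iff the formula $G_n$ evaluates to true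 under the assignment $\tilde F$, where $G_0 = \tilde I$ and $G_{k+1}$ is obtained from $G_k$ by simultaneously replacing each $q \in \tilde Q$ by $\tilde\Delta(q,\sigma_k)$. NFA-to-BFA maps an NFA $(\Sigma, Q, I, F, \Delta)$ to the BFA with $\tilde Q = Q$, $\tilde I = \bigvee_{q\in I} q$, $\tilde F$ the indicator of $F$, and $\tilde\Delta(q,\sigma) = \bigvee\{q' : (q,\sigma,q')\in\Delta\}$. Re-to-NFA is the standard Thompson construction from a regular expression to an NFA with $\epsilon$-transitions, followed by $\epsilon$-elimination. BFA operations: for BFAs with disjoint state sets, $B_1 \cup B_2$ (resp. $B_1\cap B_2$) has state set $\tilde Q_1 \uplus \tilde Q_2$, final assignment and transition function the disjoint unions of those of $B_1,B_2$, and initial formula $\tilde I_1 \vee \tilde I_2$ (resp. $\tilde I_1 \wedge \tilde I_2$); $B^\complement$ is $B$ with initial formula $\neg\tilde I$. SMT-to-BFA rewrites $\varphi$ recursively into a single BFA: $x\in L \mapsto$ NFA-to-BFA(Re-to-NFA($L$)), $\wedge \mapsto \cap$, $\vee\mapsto\cup$, $\neg \mapsto {}^\complement$. A finite-state transition system consists of Boolean state bits, Boolean input bits encoding symbols of $\Sigma$, an initial-state formula $I_B$ over the state bits, and a transition formula $\Delta_B$ over current state bits, input symbol and next-state bits; a property $P$ is a formula over state bits, and $P$ is valid if no path from a state satisfying $I_B$ reaches a state violating $P$. BFA-to-TS maps a BFA $(\Sigma,\tilde Q,\tilde I,\tilde F,\tilde\Delta)$ to the transition system with one state bit $b_q$ per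 $q\in\tilde Q$, $I_B = \tilde I[q\mapsto b_q]$, transition relation $\bigwedge_{q\in\tilde Q} \big( b_q = \bigvee_{\sigma\in\Sigma} (x=\sigma \wedge \tilde\Delta(q,\sigma)[q'\mapsto b'_{q'}])\big)$ (where $b'$ are next-state bits and $x$ the current input symbol), and property $P = \bigvee_{\tilde F(q)=1}\neg b_q \vee \bigvee_{\tilde F(q)=0} b_q$ (so $P$ is violated exactly at the state equal to $\tilde F$). *)

(* Defs.v *)
From mathcomp Require Import all_boot.
Set Implicit Arguments. Unset Strict Implicit. Unset Printing Implicit Defensive.

Section Defs.
Variable Sigma : finType.

Inductive bform (X : Type) : Type :=
| BVar of X | BTrue | BFalse | BNeg of bform X
| BAnd of bform X & bform X | BOr of bform X & bform X.

Fixpoint beval (X : Type) (e : X -> bool) (f : bform X) : bool :=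
  match f with
  | BVar x => e x | BTrue => true | BFalse => false
  | BNeg g => ~~ beval e g
  | BAnd g h => beval e g && beval e h
  | BOr g h => beval e g || beval e h
  end.

Fixpoint bsubst (X Y : Type) (s : X -> bform Y) (f : bform X) : bform Y :=
  match f with
  | BVar x => s x | BTrue => BTrue Y | BFalse => BFalse Y
  | BNeg g => BNeg (bsubst s g)
  | BAnd g h => BAnd (bsubst s g) (bsubst s h)
  | BOr g h => BOr (bsubst s g) (bsubst s h)
  end.

Definition brename (X Y : Type) (r : X -> Y) (f : bform X) : bform Y :=
  bsubst (fun x => BVar (r x)) f.

Definition bigor (X : Type) (l : seq (bform X)) : bform X := foldr (@BOr X) (BFalse X) l.
Definition bigand (X : Type) (l : seq (bform X)) : bform X := foldr (@BAnd X) (BTrue X) l.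
Definition biff (X : Type) (a b : bform X) : bform X :=
  BOr (BAnd a b) (BAnd (BNeg a) (BNeg b)).

Inductive regex : Type :=
| REmpty | REps | RChr of Sigma | RCat of regex & regex
| RAlt of regex & regex | RStar of regex.

Fixpoint lang (r : regex) (w : seq Sigma) : Prop :=
  match r with
  | REmpty => False
  | REps => w = [::]
  | RChr a => w = [:: a]
  | RCat r1 r2 => exists w1 w2, w = w1 ++ w2 /\ lang r1 w1 /\ lang r2 w2
  | RAlt r1 r2 => lang r1 w \/ lang r2 w
  | RStar r1 => exists ws : seq (seq Sigma),
      w = flatten ws /\ (forall u, u \in ws -> lang r1 u)
  end.

(* formulas over the single string variable x; [SMem r] is  x \in L(r) *)
Inductive smt : Type :=
| SMem of regex | SAnd of smt & smt | SOr of smt & smt | SNot of smt.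

Fixpoint sat (phi : smt) (w : seq Sigma) : Prop :=
  match phi with
  | SMem r => lang r w
  | SAnd p q => sat p w /\ sat q w
  | SOr p q => sat p w \/ sat q w
  | SNot p => ~ sat p w
  end.

Record nfa : Type := NFA {
  nQ : finType;
  nI : pred nQ;
  nF : pred nQ;
  nD : nQ -> Sigma -> nQ -> bool }.

(* transition labels: None = epsilon, Some a = letter a.
   For base cases, state false = initial, true = final.
   For Alt / Star, inl false = new initial, inl true = new final. *)
Fixpoint tst (r : regex) : finType :=
  match r with
  | REmpty | REps | RChr _ => bool
  | RCat r1 r2 => (tst r1 + tst r2)%type
  | RAlt r1 r2 => (bool + (tst r1 + tst r2))%type
  | RStar r1 => (bool + tst r1)%type
  end.

Fixpoint tinit (r : regex) : tst r :=
  match r return tst r with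
  | REmpty | REps | RChr _ => false
  | RCat r1 r2 => inl (tinit r1)
  | RAlt r1 r2 => inl false
  | RStar r1 => inl false
  end.

Fixpoint tfin (r : regex) : tst r :=
  match r return tst r with
  | REmpty | REps | RChr _ => true
  | RCat r1 r2 => inr (tfin r2)
  | RAlt r1 r2 => inl true
  | RStar r1 => inl true
  end.

Unset Implicit Arguments.
Fixpoint tstep (r : regex) : tst r -> option Sigma -> tst r -> bool :=
  match r return tst r -> option Sigma -> tst r -> bool with
  | REmpty => fun _ _ _ => false
  | REps => fun p l q => [&& p == false, l == None & q == true]
  | RChr a => fun p l q => [&& p == false, l == Some a & q == true]
  | RCat r1 r2 => fun p l q =>
      match p, q with
      | inl p1, inl q1 => tstep r1 p1 l q1
      | inr p2, inr q2 => tstep r2 p2 l q2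
      | inl p1, inr q2 => [&& p1 == tfin r1, l == None & q2 == tinit r2]
      | inr _, inl _ => false
      end
  | RAlt r1 r2 => fun p l q =>
      match p, q with
      | inr (inl p1), inr (inl q1) => tstep r1 p1 l q1
      | inr (inr p2), inr (inr q2) => tstep r2 p2 l q2
      | inl false, inr (inl q1) => (l == None) && (q1 == tinit r1)
      | inl false, inr (inr q2) => (l == None) && (q2 == tinit r2)
      | inr (inl p1), inl true => (l == None) && (p1 == tfin r1)
      | inr (inr p2), inl true => (l == None) && (p2 == tfin r2)
      | _, _ => false
      end
  | RStar r1 => fun p l q =>
      match p, q with
      | inr p1, inr q1 =>
          tstep r1 p1 l q1 || [&& l == None, p1 == tfin r1 & q1 == tinit r1]
      | inl false, inr q1 => (l == None) && (q1 == tinit r1)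
      | inl false, inl true => l == None
      | inr p1, inl true => (l == None) && (p1 == tfin r1)
      | _, _ => false
      end
  end.

Definition teps (r : regex) : rel (tst r) := fun p q => tstep r p None q.

Definition re_to_nfa (r : regex) : nfa :=
  @NFA (tst r)
    (fun q => q == tinit r)
    (fun q => connect (teps r) q (tfin r))
    (fun q a q' => [exists p, connect (teps r) q p && tstep r p (Some a) q']).

Set Implicit Arguments.

Record bfa : Type := BFA {
  bQ : finType;
  bI : bform bQ;
  bF : bQ -> bool;
  bD : bQ -> Sigma -> bform bQ }.

Definition bfa_G (B : bfa) (w : seq Sigma) : bform (bQ B) :=
  foldl (fun G a => bsubst (fun q => bD q a) G) (bI B) w.

Definition bfa_accepts (B : bfa) (w : seq Sigma) : bool := beval (@bF B) (bfa_G B w).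

Definition nfa_to_bfa (A : nfa) : bfa :=
  @BFA (nQ A)
    (bigor [seq BVar q | q <- enum (nQ A) & nI q])
    (fun q => nF q)
    (fun q a => bigor [seq BVar q' | q' <- enum (nQ A) & nD q a q']).

Definition bfa_union (B1 B2 : bfa) : bfa :=
  @BFA (bQ B1 + bQ B2)%type
    (BOr (brename inl (bI B1)) (brename inr (bI B2)))
    (fun q => match q with inl q1 => bF q1 | inr q2 => bF q2 end)
    (fun q a => match q with
                | inl q1 => brename inl (bD q1 a)
                | inr q2 => brename inr (bD q2 a) end).

Definition bfa_inter (B1 B2 : bfa) : bfa :=
  @BFA (bQ B1 + bQ B2)%type
    (BAnd (brename inl (bI B1)) (brename inr (bI B2)))
    (fun q => match q with inl q1 => bF q1 | inr q2 => bF q2 end)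
    (fun q a => match q with
                | inl q1 => brename inl (bD q1 a)
                | inr q2 => brename inr (bD q2 a) end).

Definition bfa_compl (B : bfa) : bfa := @BFA (bQ B) (BNeg (bI B)) (@bF B) (@bD B).

Fixpoint smt_to_bfa (phi : smt) : bfa :=
  match phi with
  | SMem r => nfa_to_bfa (re_to_nfa r)
  | SAnd p q => bfa_inter (smt_to_bfa p) (smt_to_bfa q)
  | SOr p q => bfa_union (smt_to_bfa p) (smt_to_bfa q)
  | SNot p => bfa_compl (smt_to_bfa p)
  end.

(* variables of the transition formula: current state bit, next state bit,
   and the atom "x = a" on the current input symbol *)
Inductive tsvar (V : Type) : Type := Cur of V | Nxt of V | Inp of Sigma.

Record ts : Type := TS {
  tV : finType;
  tI : bform tV;
  tD : bform (tsvar tV);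
  tP : bform tV }.

Definition ts_step (T : ts) (v : tV T -> bool) (a : Sigma) (v' : tV T -> bool) : bool :=
  beval (fun x => match x with Cur q => v q | Nxt q => v' q | Inp b => b == a end) (tD T).

Fixpoint ts_path (T : ts) (v : tV T -> bool) (w : seq Sigma) (goal : (tV T -> bool) -> Prop)
  : Prop :=
  match w with
  | [::] => goal v
  | a :: w' => exists v', ts_step v a v' /\ ts_path v' w' goal
  end.

Definition ts_cex (T : ts) (w : seq Sigma) : Prop :=
  exists v0 : tV T -> bool, beval v0 (tI T) /\ ts_path v0 w (fun v => ~~ beval v (tP T)).

Definition ts_valid (T : ts) : Prop := ~ exists w, ts_cex T w.

Definition bfa_to_ts (B : bfa) : ts :=
  @TS (bQ B)
    (bI B)
    (bigand [seq biff (BVar (Cur q))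
                      (bigor [seq BAnd (BVar (Inp (bQ B) a)) (brename (@Nxt _) (bD q a))
                             | a <- enum Sigma])
            | q <- enum (bQ B)])
    (bigor ([seq BNeg (BVar q) | q <- enum (bQ B) & bF q]
            ++ [seq BVar q | q <- enum (bQ B) & ~~ bF q])).

End Defs.

(* Main.v *)
Require Import Defs.
From mathcomp Require Import all_boot.
From Stdlib Require Import Classical_Prop.
Set Implicit Arguments. Unset Strict Implicit. Unset Printing Implicit Defensive.

Lemma beval_subst X Y (e : Y -> bool) (s : X -> bform Y) f :
  beval e (bsubst s f) = beval (fun x => beval e (s x)) f.
Proof. by elim: f => //= [g -> | g -> h -> | g -> h ->]. Qed.

Lemma beval_rename X Y (e : Y -> bool) (r : X -> Y) f :
  beval e (brename r f) = beval (fun x => e (r x)) f.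
Proof. exact: beval_subst. Qed.

Lemma eq_beval X (e1 e2 : X -> bool) f : e1 =1 e2 -> beval e1 f = beval e2 f.
Proof. by move=> E; elim: f => //= [g ->|g -> h ->|g -> h ->]. Qed.

Lemma beval_bigor X (e : X -> bool) l : beval e (bigor l) = has (beval e) l.
Proof. by elim: l => //= f l ->. Qed.

Lemma beval_bigand X (e : X -> bool) l : beval e (bigand l) = all (beval e) l.
Proof. by elim: l => //= f l ->. Qed.

Lemma beval_bigor_var (T : finType) (e : T -> bool) (P : pred T) :
  beval e (bigor [seq BVar q | q <- enum T & P q]) = [exists q, P q && e q].
Proof.
rewrite beval_bigor has_map; apply/hasP/existsP => [[q]|[q /andP[Pq eq]]].
  by rewrite mem_filter => /andP[Pq _] /= eq; exists q; rewrite Pq.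
by exists q => //; rewrite mem_filter Pq mem_enum.
Qed.

Fixpoint accq {Sigma : finType} (B : bfa Sigma) (w : seq Sigma) (q : bQ B) : bool :=
  match w with
  | [::] => bF q
  | a :: w' => beval (@accq Sigma B w') (bD q a)
  end.

Arguments accq {Sigma} B w q.

Lemma accepts_accq (Sigma : finType) (B : bfa Sigma) w :
  bfa_accepts B w = beval (accq B w) (bI B).
Proof.
rewrite /bfa_accepts /bfa_G; move: (bI B); elim: w => [|a w IH] f //=.
by rewrite IH beval_subst.
Qed.

Lemma has_enum_eq (T : finType) (a : T) (P : pred T) :
  has (fun b => (b == a) && P b) (enum T) = P a.
Proof.
apply/hasP/idP => [[b _ /andP[/eqP-> //]]|Pa].
by exists a; rewrite ?mem_enum ?eqxx.
Qed.

Lemma ts_step_eq (Sigma : finType) (B : bfa Sigma) v a v' :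
  ts_step (T:=bfa_to_ts B) v a v' = [forall q, v q == beval v' (bD q a)].
Proof.
rewrite /ts_step /= beval_bigand all_map.
apply/allP/forallP => [H q|H q _] /=.
  move: (H q (mem_enum _ q)) => /=; rewrite beval_bigor has_map /=.
  under eq_has => b do rewrite /= beval_rename.
  rewrite has_enum_eq.
  by case: (v q); case: (beval _ _).
rewrite beval_bigor has_map /=.
under eq_has => b do rewrite /= beval_rename.
rewrite has_enum_eq.
by move: (H q) => /eqP ->; case: (beval _ _).
Qed.

Lemma ts_P_eq (Sigma : finType) (B : bfa Sigma) v :
  ~~ beval v (tP (bfa_to_ts B)) = [forall q, v q == bF q].
Proof.
rewrite /= beval_bigor has_cat !has_map negb_or.
apply/andP/forallP => [[/hasPn H1 /hasPn H2] q|H].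
  case Fq: (bF q).
    by have := H1 q; rewrite mem_filter Fq mem_enum /= => /(_ isT); case: (v q).
  by have := H2 q; rewrite mem_filter Fq mem_enum /= => /(_ isT); case: (v q).
split; apply/hasPn => q; rewrite mem_filter => /andP[Fq _] /=;
  by move: (H q) Fq; case: (bF q); case: (v q).
Qed.

Lemma ts_path_eq (Sigma : finType) (B : bfa Sigma) w v :
  ts_path (T:=bfa_to_ts B) v w (fun v => ~~ beval v (tP (bfa_to_ts B))) <-> v =1 accq B w.
Proof.
elim: w v => [|a w IH] v /=.
  rewrite ts_P_eq; split => [/forallP H q | H]; first by apply/eqP.
  by apply/forallP => q; rewrite H.
split => [[v' [st /IH E]] q | E].
  move: st; rewrite ts_step_eq => /forallP /(_ q) /eqP ->.
  by apply: eq_beval.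
exists (accq B w); split; last by apply/IH.
by rewrite ts_step_eq; apply/forallP => q; rewrite E.
Qed.

Lemma ts_cex_acc (Sigma : finType) (B : bfa Sigma) w :
  ts_cex (bfa_to_ts B) w <-> bfa_accepts B w.
Proof.
rewrite accepts_accq; split => [[v0 [I0 /ts_path_eq E]]|H].
  by rewrite -(eq_beval _ E).
by exists (accq B w); split => //; apply/ts_path_eq.
Qed.

Lemma accq_union_l (Sigma : finType) (B1 B2 : bfa Sigma) w q :
  accq (bfa_union B1 B2) w (inl q) = accq B1 w q.
Proof.
elim: w q => [|a w IH] q //=; rewrite beval_rename; exact: eq_beval.
Qed.
Lemma accq_union_r (Sigma : finType) (B1 B2 : bfa Sigma) w q :
  accq (bfa_union B1 B2) w (inr q) = accq B2 w q.
Proof.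
elim: w q => [|a w IH] q //=; rewrite beval_rename; exact: eq_beval.
Qed.
Lemma accq_inter_l (Sigma : finType) (B1 B2 : bfa Sigma) w q :
  accq (bfa_inter B1 B2) w (inl q) = accq B1 w q.
Proof.
elim: w q => [|a w IH] q //=; rewrite beval_rename; exact: eq_beval.
Qed.
Lemma accq_inter_r (Sigma : finType) (B1 B2 : bfa Sigma) w q :
  accq (bfa_inter B1 B2) w (inr q) = accq B2 w q.
Proof.
elim: w q => [|a w IH] q //=; rewrite beval_rename; exact: eq_beval.
Qed.
Lemma accq_compl (Sigma : finType) (B : bfa Sigma) w q :
  accq (bfa_compl B) w q = accq B w q.
Proof. elim: w q => [|a w IH] q //=; exact: eq_beval. Qed.

Lemma acc_union (Sigma : finType) (B1 B2 : bfa Sigma) w :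
  bfa_accepts (bfa_union B1 B2) w = bfa_accepts B1 w || bfa_accepts B2 w.
Proof.
rewrite !accepts_accq /= !beval_rename; congr (_ || _); apply: eq_beval => q.
  exact: accq_union_l.
exact: accq_union_r.
Qed.
Lemma acc_inter (Sigma : finType) (B1 B2 : bfa Sigma) w :
  bfa_accepts (bfa_inter B1 B2) w = bfa_accepts B1 w && bfa_accepts B2 w.
Proof.
rewrite !accepts_accq /= !beval_rename; congr (_ && _); apply: eq_beval => q.
  exact: accq_inter_l.
exact: accq_inter_r.
Qed.
Lemma acc_compl (Sigma : finType) (B : bfa Sigma) w :
  bfa_accepts (bfa_compl B) w = ~~ bfa_accepts B w.
Proof.
rewrite !accepts_accq /=; congr (~~ _); apply: eq_beval => q; exact: accq_compl.
Qed.

Fixpoint nacc {Sigma : finType} (A : nfa Sigma) (w : seq Sigma) (q : nQ A) : bool :=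
  match w with
  | [::] => nF q
  | a :: w' => [exists q', nD q a q' && @nacc Sigma A w' q']
  end.
Arguments nacc {Sigma} A w q.

Lemma accq_nfa (Sigma : finType) (A : nfa Sigma) w q :
  accq (nfa_to_bfa A) w q = nacc A w q.
Proof.
elim: w q => [|a w IH] q //=; rewrite beval_bigor_var.
by apply: eq_existsb => q'; rewrite IH.
Qed.

Lemma acc_nfa (Sigma : finType) (A : nfa Sigma) w :
  bfa_accepts (nfa_to_bfa A) w = [exists q, nI q && nacc A w q].
Proof.
rewrite accepts_accq /= beval_bigor_var.
by apply: eq_existsb => q; rewrite accq_nfa.
Qed.

Inductive run {Sigma : finType} {T : Type} (st : T -> option Sigma -> T -> bool) :
  T -> seq Sigma -> T -> Prop :=
| rnil p : run st p [::] p
| reps p p' w q : st p None p' -> run st p' w q -> run st p w q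
| rsym p a p' w q : st p (Some a) p' -> run st p' w q -> run st p (a :: w) q.

Lemma run_cat (Sigma : finType) T (st : T -> option Sigma -> T -> bool) p w1 q w2 s :
  run st p w1 q -> run st q w2 s -> run st p (w1 ++ w2) s.
Proof.
elim => // [x x' w y h _ IH|x a x' w y h _ IH] R.
  exact: reps h (IH R).
exact: rsym h (IH R).
Qed.

Lemma run_map (Sigma : finType) T U (st1 : T -> option Sigma -> T -> bool)
  (st2 : U -> option Sigma -> U -> bool) (f : T -> U) :
  (forall x l y, st1 x l y -> st2 (f x) l (f y)) ->
  forall x w y, run st1 x w y -> run st2 (f x) w (f y).
Proof.
move=> H x w y; elim => [p|p p' w' q h _ IH|p a p' w' q h _ IH].
- exact: rnil.
- exact: reps (H _ _ _ h) IH.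
- exact: rsym (H _ _ _ h) IH.
Qed.

Lemma run_noout (Sigma : finType) T (st : T -> option Sigma -> T -> bool) x w y :
  (forall l z, st x l z = false) -> run st x w y -> y = x /\ w = [::].
Proof. by move=> H R; case: R H => // [p p' w' q|p a p' w' q] h _ H; rewrite H in h. Qed.

Lemma run_eps_connect_aux (Sigma : finType) (T : finType) (st : T -> option Sigma -> T -> bool) p w q :
  run st p w q -> w = [::] -> connect (fun x y => st x None y) p q.
Proof.
elim => [x _ | x x' w' y h _ IH E | //]; first exact: connect0.
exact: connect_trans (connect1 h) (IH E).
Qed.

Lemma run_eps_connect (Sigma : finType) (T : finType) (st : T -> option Sigma -> T -> bool) p q :
  run st p [::] q <-> connect (fun x y => st x None y) p q.
Proof.
split; first by move=> R; exact: run_eps_connect_aux R _.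
case/connectP => s; elim: s p => [|x s IH] p /=; first by move=> _ ->; exact: rnil.
by case/andP => h pth E; exact: reps h (IH _ pth E).
Qed.

Lemma run_first (Sigma : finType) (T : finType) (st : T -> option Sigma -> T -> bool) p a w q :
  run st p (a :: w) q ->
  exists m q', connect (fun x y => st x None y) p m /\ st m (Some a) q' /\ run st q' w q.
Proof.
move=> R; move: R (erefl (a :: w)).
move: {1 3}(a :: w) => w0 R; elim: R a w => // [x x' w' y h _ IH|x b x' w' y h R _] a w E.
  have [m [q' [c [h' r]]]] := IH _ _ E.
  by exists m, q'; split => //; exact: connect_trans (connect1 h) c.
by case: E => -> ->; exists x, x'; rewrite connect0.
Qed.

Lemma nacc_run (Sigma : finType) (r : regex Sigma) w p :
  nacc (re_to_nfa _ r) w p <-> run (tstep _ r) p w (tfin r).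
Proof.
elim: w p => [|a w IH] p /=.
  by split => [H|H]; [exact/run_eps_connect | exact: (proj1 (run_eps_connect _ _ _) H)].
split.
  case/existsP => q' /andP[/existsP[m /andP[c h]] /IH R].
  have := run_cat (proj2 (run_eps_connect _ _ _) c) (rsym h R).
  by [].
case/run_first => m [q' [c [h R]]].
apply/existsP; exists q'; rewrite (IH q').2 // andbT.
by apply/existsP; exists m; rewrite h andbT.
Qed.

Lemma run_inv (Sigma : finType) T (st : T -> option Sigma -> T -> bool) p w q :
  run st p w q ->
  (q = p /\ w = [::]) \/ (exists p', st p None p' /\ run st p' w q) \/
  (exists a w' p', w = a :: w' /\ st p (Some a) p' /\ run st p' w' q).
Proof.
case => [x|x x' w' y h R|x a x' w' y h R]; first by left.
  by right; left; exists x'.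
by right; right; exists a, w', x'.
Qed.


Lemma thomA (Sigma : finType) (r : regex Sigma) w :
  lang r w -> run (tstep _ r) (tinit r) w (tfin r).
Proof.
elim: r w => [| |a|r1 IH1 r2 IH2|r1 IH1 r2 IH2|r1 IH1] w //.
- move=> /= ->; apply: reps (rnil _ _); by rewrite /= !eqxx.
- move=> /= ->; apply: rsym (rnil _ _); by rewrite /= !eqxx.
- case=> w1 [w2 [-> [L1 L2]]].
  apply: run_cat (run_map (f := inl) _ (IH1 _ L1)) _ => //.
  apply: reps (run_map (f := inr) _ (IH2 _ L2)) => //=; by rewrite !eqxx.
- case=> L.
    rewrite -[w]cats0; apply: reps; last first.
      apply: run_cat (run_map (f := fun x => inr (inl x)) _ (IH1 _ L)) _ => //.
      by apply: reps (rnil _ _); rewrite /= !eqxx.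
    by rewrite /= !eqxx.
  rewrite -[w]cats0; apply: reps; last first.
    apply: run_cat (run_map (f := fun x => inr (inr x)) _ (IH2 _ L)) _ => //.
    by apply: reps (rnil _ _); rewrite /= !eqxx.
  by rewrite /= !eqxx.
- case=> ws [-> Hws]; case: ws Hws => [|u ws] Hws.
    by apply: reps (rnil _ _).
  have Hu : lang r1 u by apply: Hws; rewrite inE eqxx.
  have loop : forall vs, (forall v, v \in vs -> lang r1 v) ->
      run (tstep _ (RStar r1)) (inr (tfin r1)) (flatten vs) (inr (tfin r1)).
    elim => [|v vs IHv] Hv /=; first exact: rnil.
    have Lv : lang r1 v by apply: Hv; rewrite inE eqxx.
    have Rv : run (tstep _ (RStar r1)) (inr (tinit r1)) v (inr (tfin r1)).
      by apply: (run_map (f := inr) _ (IH1 _ Lv)) => x l y /= ->.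
    have Rs := IHv (fun v' v'in => Hv v' (@mem_behead _ (v :: vs) _ v'in)).
    apply: reps (run_cat Rv Rs).
    by rewrite /= !eqxx orbT.
  have Ru : run (tstep _ (RStar r1)) (inr (tinit r1)) u (inr (tfin r1)).
    by apply: (run_map (f := inr) _ (IH1 _ Hu)) => x l y /= ->.
  have Rs := loop ws (fun v' v'in => Hws v' (@mem_behead _ (u :: ws) _ v'in)).
  have Rend : run (tstep _ (RStar r1)) (inr (tfin r1)) [::] (inl true).
    by apply: reps (rnil _ _); rewrite /= !eqxx.
  rewrite (_ : flatten (u :: ws) = u ++ (flatten ws ++ [::])); last by rewrite cats0.
  apply: reps (run_cat Ru (run_cat Rs Rend)).
  by rewrite /= !eqxx.
Qed.

Lemma cat_right (Sigma : finType) (r1 r2 : regex Sigma) x w y :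
  run (tstep _ (RCat r1 r2)) x w y -> forall p q, x = inr p -> y = inr q ->
  run (tstep _ r2) p w q.
Proof.
elim => [x0|x0 x' w' y0 h _ IH|x0 a x' w' y0 h _ IH] p q ex ey; subst.
- by case: ey => ->; exact: rnil.
- by case: x' h IH => x' //= h IH; exact: reps h (IH _ _ erefl erefl).
- by case: x' h IH => x' //= h IH; exact: rsym h (IH _ _ erefl erefl).
Qed.

Lemma cat_dec (Sigma : finType) (r1 r2 : regex Sigma) x w y :
  run (tstep _ (RCat r1 r2)) x w y -> forall p q, x = inl p -> y = inr q ->
  exists w1 w2, w = w1 ++ w2 /\ run (tstep _ r1) p w1 (tfin r1) /\
                run (tstep _ r2) (tinit r2) w2 q.
Proof.
elim => [x0|x0 x' w' y0 h R IH|x0 a x' w' y0 h R IH] p q ex ey; subst.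
- by [].
- case: x' h R IH => x' /= h R IH.
    have [w1 [w2 [-> [R1 R2]]]] := IH _ _ erefl erefl.
    by exists w1, w2; split => //; split => //; exact: reps h R1.
  case/andP: h => /eqP -> /eqP E; subst x'.
  exists [::], w'; split => //; split; first exact: rnil.
  exact: cat_right R _ _ erefl erefl.
- case: x' h R IH => x' /= h R IH.
    have [w1 [w2 [-> [R1 R2]]]] := IH _ _ erefl erefl.
    by exists (a :: w1), w2; split => //; split => //; exact: rsym h R1.
  by rewrite andbF in h.
Qed.

Lemma alt_l (Sigma : finType) (r1 r2 : regex Sigma) x w y :
  run (tstep _ (RAlt r1 r2)) x w y -> forall p, x = inr (inl p) -> y = inl true ->
  run (tstep _ r1) p w (tfin r1).
Proof.
elim => [x0|x0 x' w' y0 h R IH|x0 a x' w' y0 h R IH] p ex ey; subst.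
- by [].
- case: x' h R IH => [[]|[x'|x']] //= h R IH.
    move/eqP: h => ->.
    have [_ ->] := run_noout (x := inl true) (fun l z => erefl) R.
    exact: rnil.
  exact: reps h (IH _ erefl erefl).
- case: x' h R IH => [[]|[x'|x']] //= h R IH.
  exact: rsym h (IH _ erefl erefl).
Qed.

Lemma alt_r (Sigma : finType) (r1 r2 : regex Sigma) x w y :
  run (tstep _ (RAlt r1 r2)) x w y -> forall p, x = inr (inr p) -> y = inl true ->
  run (tstep _ r2) p w (tfin r2).
Proof.
elim => [x0|x0 x' w' y0 h R IH|x0 a x' w' y0 h R IH] p ex ey; subst.
- by [].
- case: x' h R IH => [[]|[x'|x']] //= h R IH.
    move/eqP: h => ->.
    have [_ ->] := run_noout (x := inl true) (fun l z => erefl) R.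
    exact: rnil.
  exact: reps h (IH _ erefl erefl).
- case: x' h R IH => [[]|[x'|x']] //= h R IH.
  exact: rsym h (IH _ erefl erefl).
Qed.

Lemma star_dec (Sigma : finType) (r1 : regex Sigma) :
  (forall w, run (tstep _ r1) (tinit r1) w (tfin r1) -> lang r1 w) ->
  forall x w y, run (tstep _ (RStar r1)) x w y -> forall p, x = inr p -> y = inl true ->
  exists w0 ws, w = w0 ++ flatten ws /\ run (tstep _ r1) p w0 (tfin r1) /\
                (forall u, u \in ws -> lang r1 u).
Proof.
move=> IH1 x w y.
have NO : forall l (z : tst (RStar r1)), tstep _ (RStar r1) (inl true) l z = false.
  by move=> l [[]|z].
elim => [x0|x0 x' w' y0 h R IH|x0 a x' w' y0 h R IH] p ex ey; subst.
- by [].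
- case: x' h R IH => [[]|x'] //= h R IH.
    move/eqP: h => ->.
    have [_ ->] := run_noout NO R.
    by exists [::], [::]; split => //; split => //; exact: rnil.
  have [w0 [ws [-> [R0 Hws]]]] := IH _ erefl erefl.
  case/orP: h => [h|/andP[/eqP -> /eqP E]].
    by exists w0, ws; split => //; split => //; exact: reps h R0.
  subst x'; exists [::], (w0 :: ws); split => //; split; first exact: rnil.
  move=> u; rewrite inE => /orP[/eqP ->|]; [exact: IH1 | exact: Hws].
- case: x' h R IH => [[]|x'] //= h R IH.
  have [w0 [ws [-> [R0 Hws]]]] := IH _ erefl erefl.
  rewrite ?orbF in h.
  by exists (a :: w0), ws; split => //; split => //; exact: rsym h R0.
Qed.

Lemma thomB (Sigma : finType) (r : regex Sigma) w :
  run (tstep _ r) (tinit r) w (tfin r) -> lang r w.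
Proof.
elim: r w => [| |c|r1 IH1 r2 IH2|r1 IH1 r2 IH2|r1 IH1] w R.
- by have [] := run_noout (fun l z => erefl) R.
- case: (run_inv R) => [[]//|[[p' [h R']]|[b [w' [p' [_ [h _]]]]]]] //.
  move: h => /= /eqP E; subst p'.
  have [_ ->] := run_noout (x := true) (fun l z => erefl) R'.
  by [].
- case: (run_inv R) => [[]//|[[p' [h R']]|[b [w' [p' [-> [h R']]]]]]] //.
  move: h => /= /andP[/eqP [->] /eqP E]; subst p'.
  by have [_ ->] := run_noout (x := true) (fun l z => erefl) R'.
- have [w1 [w2 [-> [R1 R2]]]] := cat_dec R erefl erefl.
  by exists w1, w2; split => //; split; [exact: IH1 | exact: IH2].
- case: (run_inv R) => [[]//|[[p' [h R']]|[b [w' [p' [_ [h _]]]]]]].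
    case: p' h R' => [[]|[p'|p']] //= /eqP E R'; subst p'.
      by left; apply: IH1; exact: (alt_l R' erefl erefl).
    by right; apply: IH2; exact: (alt_r R' erefl erefl).
  by case: p' h => [[]|[p'|p']].
- have NO : forall l (z : tst (RStar r1)), tstep _ (RStar r1) (inl true) l z = false.
    by move=> l [[]|z].
  case: (run_inv R) => [[]//|[[p' [h R']]|[b [w' [p' [_ [h _]]]]]]].
    case: p' h R' => [[]|p'] //= h R'.
      have [_ ->] := run_noout NO R'.
      by exists [::].
    move/eqP: h => E; subst p'.
    have [w0 [ws [-> [R0 Hws]]]] := star_dec IH1 R' erefl erefl.
    exists (w0 :: ws); split => //.
    by move=> u; rewrite inE => /orP[/eqP ->|]; [exact: IH1 | exact: Hws].
  by case: p' h => [[]|p'].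
Qed.

Lemma sat_acc (Sigma : finType) (phi : smt Sigma) w :
  sat phi w <-> bfa_accepts (smt_to_bfa phi) w.
Proof.
elim: phi => [r|p IHp q IHq|p IHp q IHq|p IHp] /=.
- rewrite acc_nfa; split => [L|/existsP[q /andP[/eqP -> /nacc_run R]]].
    apply/existsP; exists (tinit r); apply/andP; split; [exact: eqxx | exact: ((nacc_run w (tinit r)).2 (thomA L))].
  exact: thomB.
- rewrite acc_inter; split => [[/IHp -> /IHq ->]//|/andP[/IHp ? /IHq ?]//].
- rewrite acc_union; split => [[/IHp ->|/IHq ->]|/orP[/IHp|/IHq]]; rewrite ?orbT; auto.
- rewrite acc_compl; split => [H|/negP H /IHp //]; apply/negP => /IHp //.
Qed.

Theorem mainTheorem2 (Sigma : finType) (phi : smt Sigma) :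
  (forall w : seq Sigma, sat phi w <-> ts_cex (bfa_to_ts (smt_to_bfa phi)) w) /\
  ((exists w : seq Sigma, sat phi w) <-> ~ ts_valid (bfa_to_ts (smt_to_bfa phi))).
Proof.
have H : forall w, sat phi w <-> ts_cex (bfa_to_ts (smt_to_bfa phi)) w.
  move=> w; split => [/sat_acc A|/ts_cex_acc /sat_acc //]; exact/ts_cex_acc.
split => //; split => [[w /H C] V|NV].
  by apply: V; exists w.
case: (classic (exists w, sat phi w)) => // N; exfalso; apply: NV => [[w /H S]].
by apply: N; exists w.
Qed.
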